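(* Let $\alpha>0$ and let $X_\alpha:\mathbb{C}\cong\mathbb{R}^2\to\mathrm{Nil}_3$ be the map defined in the context (with $\theta=\tilde\theta_\alpha$). Then $X_\alpha$ is simply periodic: there exists $Z\in\mathbb{C}\setminus\{0\}$ such that $X_\alpha(z+Z)=X_\alpha(z)$ for all $z\in\mathbb{C}$.
   Context: $\mathrm{Nil}_3$ is $\mathbb{R}^3$ with the metric $dx_1^2+dx_2^2+\big(dx_3+\tfrac12(x_2dx_1-x_1dx_2)\big)^2$. For $\alpha>0$ and $\theta\in\mathbb{R}$ set $C_{\alpha,\theta}=\frac{\sin(2\theta)}{2\alpha}$ and $P_{\alpha,\theta}(x)=\alpha^2+\cos(2\theta)x^2-C_{\alpha,\theta}^2x^4$. Let $\theta^+_\alpha=\pi/2$ if $\alpha>1$, and $\theta^+_\alpha=\frac12\arccos(1-2\alpha^2)$ if $\alpha\le1$. Let $$L(\alpha,\theta)=\int_{-1}^1\frac{2\alpha C_{\alpha,\theta}^2x^2-\alpha\cos(2\theta)+C_{\alpha,\theta}^2x^2\sqrt{P_{\alpha,\theta}(x)}}{\sqrt{(1-x^2)P_{\alpha,\theta}(x)}(\alpha+\sqrt{P_{\alpha,\theta}(x)})}dx.$$ Let $\theta=\tilde\theta_\alpha$ be the unique $\theta\in(0,\theta^+_\alpha)\cap(0,\pi/4)$ with $L(\alpha,\theta)=0$, and $C=C_{\alpha,\theta}$. Let $\varphi$ solve $\varphi'^2=P_{\alpha,\theta}(\cos\varphi)$ with $\varphi(0)=0$ and $\varphi'(0)\le0$.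 Define $\beta'=C\cos^2\varphi$ with $\beta(0)=0$, and $G'=\frac{C^2\cos^2\varphi-\cos 2\theta}{\alpha-\varphi'}$ with $G(0)=0$. Put $A=\alpha v+\beta(u)$. Then $X_\alpha(u+iv)=(x_1,x_2,x_3)$ with $x_1=\frac{G'}{\alpha}\cos\varphi\sinh A-\frac C\alpha\sin\varphi\cosh A$, $x_2=Cv-G$, $x_3=-\frac{x_1x_2}2+\frac C\alpha(\frac{G'}{\alpha}-1)\cos\varphi\cosh A-\frac1\alpha(\frac{C^2}\alpha+G')\sin\varphi\sinh A$, where $\varphi,G,G'$ are evaluated at $u$. *)

(* Defs.v *)
From Stdlib Require Import Reals.
From Coquelicot Require Import Coquelicot.
Open Scope R_scope.

Definition Cc (a th : R) : R := sin (2 * th) / (2 * a).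

Definition Pp (a th x : R) : R :=
  a ^ 2 + cos (2 * th) * x ^ 2 - (Cc a th) ^ 2 * x ^ 4.

Definition theta_plus (a : R) : R :=
  if Rlt_dec 1 a then PI / 2 else / 2 * acos (1 - 2 * a ^ 2).

Definition L_integrand (a th x : R) : R :=
  let C := Cc a th in
  let P := Pp a th x in
  (2 * a * C ^ 2 * x ^ 2 - a * cos (2 * th) + C ^ 2 * x ^ 2 * sqrt P)
  / (sqrt ((1 - x ^ 2) * P) * (a + sqrt P)).

Definition L_is_zero (a th : R) : Prop :=
  is_RInt_gen (L_integrand a th) (at_right (-1)) (at_left 1) 0.

Definition Gprime (a th : R) (phi : R -> R) (u : R) : R :=
  ((Cc a th) ^ 2 * cos (phi u) ^ 2 - cos (2 * th)) / (a - Derive phi u).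

(* X_alpha(u + i v) = (x1, x2, x3) *)
Definition Xmap (a th : R) (phi beta G : R -> R) (u v : R) : R * R * R :=
  let C := Cc a th in
  let Gp := Gprime a th phi u in
  let A := a * v + beta u in
  let x1 := Gp / a * cos (phi u) * sinh A - C / a * sin (phi u) * cosh A in
  let x2 := C * v - G u in
  let x3 := - (x1 * x2) / 2
            + C / a * (Gp / a - 1) * cos (phi u) * cosh A
            - / a * (C ^ 2 / a + Gp) * sin (phi u) * sinh A in
  (x1, x2, x3).

(* Main.v *)
Require Import Defs.
From Stdlib Require Import Reals Lra Psatz.
From Coquelicot Require Import Coquelicot.
Open Scope R_scope.

Definition Gint (g : R -> R) (y : R) : R := RInt g 0 y.

Lemma exRI (g : R -> R) a b : (forall x, continuous g x) -> ex_RInt g a b.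
Proof. intros Hg. apply (ex_RInt_continuous (V:=R_CompleteNormedModule)). intros; apply Hg. Qed.

Lemma Gint_deriv (g : R -> R) : (forall x, continuous g x) ->
  forall y, is_derive (Gint g) y (g y).
Proof.
  intros Hg y. apply (is_derive_RInt (V:=R_NormedModule) g (Gint g) 0 y); [|apply Hg].
  apply filter_forall. intros b. apply (RInt_correct (V:=R_CompleteNormedModule) g 0 b). apply exRI; auto.
Qed.

Lemma comp_deriv (F G : R -> R) x dF dG : is_derive F (G x) dF -> is_derive G x dG ->
  is_derive (fun y => F (G y)) x (dG * dF).
Proof. intros; apply (is_derive_comp F G); auto. Qed.

Lemma shift_deriv p x : is_derive (fun y => y - p) x 1.
Proof. auto_derive; auto; ring. Qed.

Lemma opp_deriv x : is_derive (fun y => - y) x (-1).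
Proof. auto_derive; auto; ring. Qed.

Lemma const_deriv (h : R -> R) : (forall x, is_derive h x 0) -> forall x y, h x = h y.
Proof.
  intros Hh x y. destruct (Rtotal_order x y) as [H|[H|H]].
  - apply (eq_is_derive (V:=R_NormedModule) h x y); [intros; apply Hh|exact H].
  - rewrite H; reflexivity.
  - symmetry; apply (eq_is_derive (V:=R_NormedModule) h y x); [intros; apply Hh|exact H].
Qed.

Lemma Gint_0 g : Gint g 0 = 0.
Proof. unfold Gint. apply (RInt_point (V:=R_CompleteNormedModule)). Qed.

Lemma Gint_shift (g : R -> R) (p : R) : (forall x, continuous g x) ->
  (forall y, g (y - p) = g y) -> forall y, Gint g (y - p) = Gint g y + Gint g (- p).
Proof.
  intros Hg Hp y.
  assert (E : forall y, (fun y => Gint g (y - p) - Gint g y) y = (fun y => Gint g (y - p) - Gint g y) 0).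
  { intros z. apply (const_deriv (fun y => Gint g (y - p) - Gint g y)). intros x.
    replace 0 with (1 * g (x - p) - g x) at 1 by (rewrite Hp; ring).
    apply (is_derive_minus (fun y => Gint g (y - p))).
    - apply (comp_deriv (Gint g) (fun y => y - p)). apply Gint_deriv; auto.
      apply shift_deriv.
    - apply Gint_deriv; auto. }
  specialize (E y). simpl in E. rewrite Gint_0 in E. replace (0 - p) with (-p) in E by ring. lra.
Qed.

Lemma Gint_even (g : R -> R) : (forall x, continuous g x) ->
  (forall y, g (- y) = g y) -> forall y, Gint g (- y) = - Gint g y.
Proof.
  intros Hg Hp y.
  assert (E : forall y, (fun y => Gint g (- y) + Gint g y) y = (fun y => Gint g (- y) + Gint g y) 0).
  { intros z. apply (const_deriv (fun y => Gint g (- y) + Gint g y)). intros x.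
    replace 0 with ((-1) * g (- x) + g x) at 1.
    apply (is_derive_plus (fun y => Gint g (- y))).
    - apply (comp_deriv (Gint g) (fun y => - y)). apply Gint_deriv; auto.
      apply opp_deriv.
    - apply Gint_deriv; auto.
    - rewrite Hp. ring. }
  specialize (E y). simpl in E. rewrite Ropp_0, Gint_0 in E. lra.
Qed.

Lemma Gint_lt (g : R -> R) : (forall x, continuous g x) -> (forall x, 0 < g x) ->
  forall y1 y2, y1 < y2 -> Gint g y1 < Gint g y2.
Proof.
  intros Hg Hp y1 y2 H.
  assert (E : Gint g y2 = Gint g y1 + RInt g y1 y2).
  { unfold Gint. symmetry. apply (RInt_Chasles (V:=R_CompleteNormedModule) g 0 y1 y2); apply exRI; auto. }
  assert (0 < RInt g y1 y2) by (apply RInt_gt_0; auto).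
  lra.
Qed.

Lemma Gint_inj (g : R -> R) : (forall x, continuous g x) -> (forall x, 0 < g x) ->
  forall y1 y2, Gint g y1 = Gint g y2 -> y1 = y2.
Proof.
  intros Hg Hp y1 y2 H. destruct (Rtotal_order y1 y2) as [L|[L|L]]; auto.
  - pose proof (Gint_lt g Hg Hp _ _ L); lra.
  - pose proof (Gint_lt g Hg Hp _ _ L); lra.
Qed.

Lemma compose_Gint (phi f g B : R -> R) :
  (forall x, continuous g x) ->
  (forall u, is_derive phi u (- f (phi u))) ->
  (forall u, is_derive B u (g (phi u) * f (phi u))) ->
  phi 0 = 0 -> B 0 = 0 ->
  forall u, B u = - Gint g (phi u).
Proof.
  intros Hg Hphi HB H0 HB0 u.
  assert (E : forall u, (fun u => B u + Gint g (phi u)) u = (fun u => B u + Gint g (phi u)) 0).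
  { intros z. apply (const_deriv (fun u => B u + Gint g (phi u))). intros x.
    replace 0 with (g (phi x) * f (phi x) + (- f (phi x)) * (g (phi x))) at 1.
    apply (is_derive_plus B (fun u => Gint g (phi u))). apply HB.
    apply (comp_deriv (Gint g) phi). apply Gint_deriv; auto. apply Hphi.
    ring. }
  specialize (E u). simpl in E. rewrite H0, HB0, Gint_0 in E. lra.
Qed.

Definition ff a th y := sqrt (Pp a th (cos y)).
Definition g1 a th y := / ff a th y.
Definition gK a th y := Cc a th * cos y ^ 2 / ff a th y.
Definition gM a th y := (Cc a th ^ 2 * cos y ^ 2 - cos (2*th)) / (a + ff a th y) / ff a th y.
Definition ell a th y := Cc a th * gK a th y + a * gM a th y.

Section S.
Variables a th : R.
Hypothesis Ha : 0 < a.
Hypothesis HP : forall y, 0 < Pp a th (cos y).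

Lemma ff_pos y : 0 < ff a th y.
Proof. apply sqrt_lt_R0, HP. Qed.

Lemma ff_der y : ex_derive (ff a th) y.
Proof. unfold ff. pose proof (HP y). unfold Pp in *. auto_derive. lra. Qed.

Lemma ff_cont y : continuous (ff a th) y.
Proof. apply (ex_derive_continuous (K:=R_AbsRing) (V:=R_NormedModule)). apply ff_der. Qed.

Lemma g1_cont y : continuous (g1 a th) y.
Proof. apply (ex_derive_continuous (K:=R_AbsRing) (V:=R_NormedModule)). unfold g1.
  pose proof (ff_pos y). pose proof (ff_der y).
  auto_derive. split; auto. lra. Qed.

Ltac cont_tac := apply (ex_derive_continuous (K:=R_AbsRing) (V:=R_NormedModule)).

Lemma gK_cont y : continuous (gK a th) y.
Proof. cont_tac. unfold gK.
  pose proof (ff_pos y). pose proof (ff_der y).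
  auto_derive. split; auto. lra. Qed.

Lemma gM_cont y : continuous (gM a th) y.
Proof. cont_tac. unfold gM.
  pose proof (ff_pos y). pose proof (ff_der y).
  auto_derive. repeat split; auto; lra. Qed.

Lemma ell_cont y : continuous (ell a th) y.
Proof. cont_tac. unfold ell, gK, gM.
  pose proof (ff_pos y). pose proof (ff_der y).
  auto_derive. repeat split; auto; lra. Qed.

Lemma ell_L y : 0 < y < PI -> sin y * L_integrand a th (cos y) = ell a th y.
Proof.
  intros Hy. pose proof (sin_gt_0 y (proj1 Hy) (proj2 Hy)) as Hs.
  pose proof (ff_pos y) as Hf. pose proof (HP y) as Hp.
  unfold L_integrand, ell, gK, gM. fold (ff a th y).
  assert (E : 1 - cos y ^ 2 = sin y ^ 2) by (pose proof (sin2_cos2 y); unfold Rsqr in *; nra).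
  rewrite E.
  rewrite sqrt_mult by (try lra; apply pow2_ge_0).
  fold (ff a th y).
  replace (sqrt (sin y ^ 2)) with (sin y) by (rewrite <- Rsqr_pow2, sqrt_Rsqr; lra). unfold Rsqr.
  field. lra.
Qed.

Lemma L_cont x : -1 < x < 1 -> (forall z, -1 <= z <= 1 -> 0 < Pp a th z) ->
  continuous (L_integrand a th) x.
Proof. intros Hx Hz. cont_tac. unfold L_integrand.
  pose proof (Hz x ltac:(lra)) as Hp.
  assert (0 < (1 - x^2) * Pp a th x) by (apply Rmult_lt_0_compat; nra).
  assert (0 < sqrt ((1 - x^2) * Pp a th x)) by (apply sqrt_lt_R0; auto).
  assert (0 < sqrt (Pp a th x)) by (apply sqrt_lt_R0; auto).
  unfold Pp in *. auto_derive. repeat split; auto; try lra.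
  apply Rmult_integral_contrapositive_currified; apply Rgt_not_eq.
  - apply sqrt_lt_R0. lra.
  - apply Rplus_lt_le_0_compat; [lra| apply sqrt_pos].
Qed.

Lemma cosPI_m x : cos (PI - x) = - cos x.
Proof. rewrite cos_minus, cos_PI, sin_PI. ring. Qed.

Lemma cos_open x : 0 < x < PI -> -1 < cos x < 1.
Proof. intros H. pose proof (sin_gt_0 x (proj1 H) (proj2 H)). pose proof (sin2_cos2 x).
  pose proof (COS_bound x). unfold Rsqr in *. split.
  - destruct (Req_dec (cos x) (-1)); [nra|lra].
  - destruct (Req_dec (cos x) 1); [nra|lra]. Qed.

Hypothesis HP1 : forall z, -1 <= z <= 1 -> 0 < Pp a th z.

Lemma RInt_ell_L e : 0 < e < PI / 2 ->
  RInt (ell a th) e (PI - e) = RInt (L_integrand a th) (- cos e) (cos e).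
Proof.
  intros He. pose proof PI_RGT_0.
  assert (HC : RInt (fun y => scal (- sin y) (L_integrand a th (cos y))) e (PI - e)
            = RInt (L_integrand a th) (cos e) (cos (PI - e))).
  { apply (RInt_comp (V:=R_CompleteNormedModule)).
    - intros x Hx. rewrite Rmin_left in Hx by lra. rewrite Rmax_right in Hx by lra.
      apply L_cont; auto. apply cos_open; lra.
    - intros x _. split.
      + auto_derive; auto; ring.
      + cont_tac. auto_derive; auto. }
  rewrite cosPI_m in HC.
  rewrite (RInt_ext (V:=R_CompleteNormedModule) _ (fun y => opp (ell a th y))) in HC.
  2:{ intros x Hx. rewrite Rmin_left in Hx by lra. rewrite Rmax_right in Hx by lra.
      rewrite <- ell_L by lra. change (scal (- sin x) (L_integrand a th (cos x))) with ((- sin x) * (L_integrand a th (cos x))).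
      change (opp (sin x * L_integrand a th (cos x))) with (- (sin x * L_integrand a th (cos x))). symmetry; apply Ropp_mult_distr_l. }
  rewrite (RInt_opp (V:=R_CompleteNormedModule)) in HC.
  2:{ apply (ex_RInt_continuous (V:=R_CompleteNormedModule)). intros; apply ell_cont. }
  rewrite <- (opp_RInt_swap (V:=R_CompleteNormedModule) _ (- cos e)) in HC.
  2:{ apply (ex_RInt_continuous (V:=R_CompleteNormedModule)). intros z Hz.
      pose proof (cos_open e ltac:(lra)).
      assert (0 < cos e) by (apply cos_gt_0; lra).
      rewrite Rmin_left in Hz by lra. rewrite Rmax_right in Hz by lra.
      apply L_cont; auto; lra. }
  change (opp (RInt (ell a th) e (PI - e))) with (- RInt (ell a th) e (PI - e)) in HC.
  change (opp (RInt (L_integrand a th) (- cos e) (cos e))) with (- RInt (L_integrand a th) (- cos e) (cos e)) in HC.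
  lra.
Qed.

Lemma pair_lim : filterlim (fun e => (- cos e, cos e)) (at_right 0)
   (filter_prod (at_right (-1)) (at_left 1)).
Proof.
  intros P [Q R' HQ HR HPQR].
  destruct HQ as [d1 H1]. destruct HR as [d2 H2].
  assert (Hd : 0 < Rmin d1 d2) by (apply Rmin_pos; apply cond_pos).
  assert (L1 : locally 0 (fun e => ball (cos 0) (mkposreal _ Hd) (cos e))).
  { apply (continuous_cos 0). apply locally_ball. }
  assert (L2 : locally 0 (fun e => ball 0 (mkposreal _ Rlt_0_1) e)) by apply locally_ball.
  unfold filtermap, at_right, within. eapply filter_imp; [|exact (filter_and _ _ L1 L2)].
  intros e [B1 B2] Hpos. rewrite cos_0 in B1.
  change (Rabs (cos e - 1) < Rmin d1 d2) in B1. change (Rabs (e - 0) < 1) in B2.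
  pose proof PI2_1. pose proof (Rmin_l d1 d2). pose proof (Rmin_r d1 d2).
  assert (Hc : cos e < 1).
  { apply cos_open. rewrite Rminus_0_r in B2. apply Rabs_def2 in B2. lra. }
  apply Rabs_def2 in B1.
  apply (HPQR (- cos e) (cos e)).
  - apply H1. change (Rabs (- cos e - -1) < d1). apply Rabs_def1; lra. lra.
  - apply H2. change (Rabs (cos e - 1) < d2). apply Rabs_def1; lra. lra.
Qed.

Lemma RInt_ell_pi : L_is_zero a th -> RInt (ell a th) 0 PI = 0.
Proof.
  intros HL.
  assert (HL' : filterlim (fun ab : R * R => RInt (L_integrand a th) (fst ab) (snd ab))
     (filter_prod (at_right (-1)) (at_left 1)) (locally 0)).
  { intros P HPl. specialize (HL P HPl). unfold filtermapi in HL.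
    unfold filtermap. eapply filter_imp; [|exact HL]. intros ab [y [Hy Py]].
    rewrite (is_RInt_unique (V:=R_CompleteNormedModule) _ _ _ _ Hy). exact Py. }
  pose proof (filterlim_comp _ _ _ _ _ _ _ _ pair_lim HL') as H1. simpl in H1.
  assert (H2 : filterlim (fun e => RInt (ell a th) e (PI - e)) (at_right 0) (locally 0)).
  { apply (filterlim_ext_loc (fun e => RInt (L_integrand a th) (- cos e) (cos e))); auto.
    assert (L2 : locally 0 (fun e => ball 0 (mkposreal _ Rlt_0_1) e)) by apply locally_ball.
    unfold at_right, within. eapply filter_imp; [|exact L2]. intros e B Hpos.
    change (Rabs (e - 0) < 1) in B. rewrite Rminus_0_r in B. apply Rabs_def2 in B.
    pose proof PI2_1. symmetry. apply RInt_ell_L. lra. }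
  set (k := fun e => Gint (ell a th) (PI - e) - Gint (ell a th) e).
  assert (Hk : forall e, k e = RInt (ell a th) e (PI - e)).
  { intros e. unfold k, Gint.
    rewrite <- (RInt_Chasles (V:=R_CompleteNormedModule) (ell a th) 0 e (PI - e)).
    change (plus ?x ?y) with (x + y). ring.
    all: apply exRI; intros; apply ell_cont. }
  assert (H3 : filterlim k (at_right 0) (locally (k 0))).
  { apply (filterlim_filter_le_1 k (filter_le_within (F:=locally 0) (fun u => 0 < u))).
    apply (ex_derive_continuous (K:=R_AbsRing) (V:=R_NormedModule)). unfold k.
    apply (ex_derive_minus (fun e => Gint (ell a th) (PI - e))).
    - eexists. eapply (comp_deriv (Gint (ell a th)) (fun e => PI - e) _ _ (-1)).
      apply Gint_deriv. intros; apply ell_cont. auto_derive; auto; ring.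
    - eexists. apply Gint_deriv. intros; apply ell_cont. }
  rewrite Hk in H3. replace (PI - 0) with PI in H3 by ring.
  assert (H4 : filterlim (fun e => RInt (ell a th) e (PI - e)) (at_right 0) (locally (RInt (ell a th) 0 PI))) by (eapply filterlim_ext; [exact Hk| exact H3]).
  apply (filterlim_locally_unique _ _ _ H4 H2).
Qed.
End S.

Lemma right_min (f : R -> R) x l : is_derive f x l ->
  (exists d, 0 < d /\ forall y, x < y < x + d -> f x <= f y) -> 0 <= l.
Proof.
  intros Hd [d [Hd0 Hm]].
  apply is_derive_Reals in Hd.
  destruct (Rle_or_lt 0 l) as [|Hl]; auto.
  destruct (Hd (-l) ltac:(lra)) as [del Hdel].
  set (h := Rmin (d/2) (del/2)).
  assert (0 < h) by (unfold h; apply Rmin_pos; pose proof (cond_pos del); lra).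
  assert (h <= d/2) by apply Rmin_l. assert (h <= del/2) by apply Rmin_r.
  pose proof (cond_pos del).
  specialize (Hdel h ltac:(lra) ltac:(rewrite Rabs_pos_eq; lra)).
  specialize (Hm (x+h) ltac:(lra)).
  assert (0 <= (f (x + h) - f x) / h).
  { apply Rmult_le_pos; [lra| left; apply Rinv_0_lt_compat; lra]. }
  revert Hdel. unfold Rabs; destruct Rcase_abs; lra.
Qed.

Lemma left_min (f : R -> R) x l : is_derive f x l ->
  (exists d, 0 < d /\ forall y, x - d < y < x -> f x <= f y) -> l <= 0.
Proof.
  intros Hd [d [Hd0 Hm]].
  apply is_derive_Reals in Hd.
  destruct (Rle_or_lt l 0) as [|Hl]; auto.
  destruct (Hd l ltac:(lra)) as [del Hdel].
  set (h := Rmin (d/2) (del/2)).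
  assert (0 < h) by (unfold h; apply Rmin_pos; pose proof (cond_pos del); lra).
  assert (h <= d/2) by apply Rmin_l. assert (h <= del/2) by apply Rmin_r.
  pose proof (cond_pos del).
  specialize (Hdel (-h) ltac:(lra) ltac:(rewrite Rabs_Ropp, Rabs_pos_eq; lra)).
  specialize (Hm (x+-h) ltac:(lra)).
  assert ((f (x + - h) - f x) / - h <= 0).
  { unfold Rdiv. rewrite Rinv_opp.
    assert (0 < /h) by (apply Rinv_0_lt_compat; lra). nra. }
  revert Hdel. unfold Rabs; destruct Rcase_abs; lra.
Qed.

Lemma no_sign_change (f df : R -> R) u1 : (forall x, is_derive f x (df x)) ->
  (forall x, df x <> 0) -> 0 < u1 -> df 0 < 0 -> 0 < df u1 -> False.
Proof.
  intros Hd Hn Hu H0 H1.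
  destruct (continuity_ab_min f 0 u1) as [m [Hm Hmb]]; [lra| |].
  { intros c _. apply continuity_pt_filterlim. apply (ex_derive_continuous (K:=R_AbsRing) (V:=R_NormedModule)).
    eexists; apply Hd. }
  destruct (Req_dec m 0) as [E|E].
  { subst m. assert (0 <= df 0); [|lra].
    apply (right_min f 0); auto. exists u1; split; auto. intros; apply Hm; lra. }
  destruct (Req_dec m u1) as [E'|E'].
  { subst m. assert (df u1 <= 0); [|lra].
    apply (left_min f u1); auto. exists u1; split; auto. intros; apply Hm; lra. }
  apply (Hn m). apply Rle_antisym.
  - apply (left_min f m); auto. exists (m - 0); split; [lra|]. intros; apply Hm; lra.
  - apply (right_min f m); auto. exists (u1 - m); split; [lra|]. intros; apply Hm; lra.
Qed.

Lemma deriv_neg (f df : R -> R) : (forall x, is_derive f x (df x)) ->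
  (forall x, df x <> 0) -> df 0 < 0 -> forall u, df u < 0.
Proof.
  intros Hd Hn H0 u.
  destruct (Rlt_or_le (df u) 0) as [|Hu]; auto.
  assert (Hp : 0 < df u) by (specialize (Hn u); lra).
  destruct (Rtotal_order u 0) as [Hlt|[Heq|Hgt]].
  - exfalso. apply (no_sign_change (fun t => - f (- t)) (fun t => df (- t)) (- u)).
    + intros x.
      pose proof (is_derive_comp f (fun t => -t) x _ _ (Hd (-x)) (is_derive_opp (fun t => t) x _ (is_derive_id x))) as Hc.
      pose proof (is_derive_opp _ _ _ Hc) as Hc2. simpl in Hc2.
      replace (df (-x)) with (opp (scal (opp one) (df (- x)))) at 1. exact Hc2.
      rewrite scal_opp_l, scal_one, opp_opp. reflexivity.
    + intros; apply Hn.
    + lra.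
    + rewrite Ropp_0; auto.
    + rewrite Ropp_involutive; auto.
  - subst; lra.
  - exfalso. apply (no_sign_change f df u); auto.
Qed.

Lemma P1_pos a th : 0 < a -> 0 < th -> th < theta_plus a -> th < PI / 4 ->
  0 < Pp a th 1.
Proof.
  intros Ha H0 Hp H4.
  assert (Hc : 0 < cos (2*th)) by (apply cos_gt_0; lra).
  assert (Hk : 2 * a^2 + cos (2*th) > 1).
  { unfold theta_plus in Hp. destruct (Rlt_dec 1 a).
    - nra.
    - assert (Hb : -1 <= 1 - 2*a^2 <= 1) by nra.
      pose proof (acos_bound (1 - 2*a^2)).
      pose proof (cos_acos _ Hb).
      assert (cos (acos (1 - 2 * a ^ 2)) < cos (2*th)).
      { apply cos_decreasing_1; try lra. }
      lra. }
  unfold Pp, Cc.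
  pose proof (sin2_cos2 (2*th)).
  replace (1^2) with 1 by ring. replace (1^4) with 1 by ring.
  assert (Hs : (sin (2 * th) / (2 * a)) ^ 2 = sin (2*th) ^2 / (4 * a^2)) by (field; lra).
  rewrite Hs.
  assert (4*a^2 * (a ^ 2 + cos (2 * th) * 1 - sin (2 * th) ^ 2 / (4 * a ^ 2) * 1) = (2*a^2 + cos (2*th))^2 - 1).
  { field_simplify; try lra. unfold Rsqr in H. nra. }
  nra.
Qed.

Lemma P_pos a th x : 0 < a -> 0 < th -> th < theta_plus a -> th < PI / 4 ->
  -1 <= x <= 1 -> 0 < Pp a th x.
Proof.
  intros Ha H0 Hp H4 Hx.
  pose proof (P1_pos a th Ha H0 Hp H4).
  unfold Pp in *.
  set (t := x^2). assert (0 <= t <= 1) by (unfold t; nra).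
  replace (x^4) with (t^2) by (unfold t; ring).
  assert (a ^ 2 + cos (2 * th) * t - Cc a th ^ 2 * t^2 >= (1-t)*a^2 + t * (a ^ 2 + cos (2 * th) * 1 ^ 2 - Cc a th ^ 2 * 1 ^ 4)).
  { assert (0 <= Cc a th ^2) by apply pow2_ge_0.
    assert (0 <= Cc a th ^2 * (t*(1-t))) by (apply Rmult_le_pos; nra). nra. }
  assert (0 < a^2) by nra.
  assert ((1-t)*a^2 + t * (a ^ 2 + cos (2 * th) * 1 ^ 2 - Cc a th ^ 2 * 1 ^ 4) > 0).
  { destruct (Rlt_or_le t 1).
    - assert (0 < (1-t)*a^2) by (apply Rmult_lt_0_compat; lra). assert (0 <= t * (a ^ 2 + cos (2 * th) * 1 ^ 2 - Cc a th ^ 2 * 1 ^ 4)) by (apply Rmult_le_pos; lra). lra.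
    - replace t with 1 by lra. lra. }
  lra.
Qed.
Lemma lin3_deriv (f g h : R -> R) c d x df dg dh : is_derive f x df -> is_derive g x dg -> is_derive h x dh ->
  is_derive (fun y => f y - c * g y - d * h y) x (df - c * dg - d * dh).
Proof.
  intros Hf Hg Hh. apply is_derive_Reals in Hf, Hg, Hh. apply is_derive_Reals.
  apply (derivable_pt_lim_minus (fun y => f y - c * g y) (fun y => d * h y)).
  apply (derivable_pt_lim_minus f (fun y => c * g y)). auto.
  apply (derivable_pt_lim_scal g). auto.
  apply (derivable_pt_lim_scal h). auto.
Qed.

Lemma cos_m2pi y : cos (y - 2 * PI) = cos y.
Proof. rewrite cos_minus, cos_2PI, sin_2PI. ring. Qed.
Lemma sin_m2pi y : sin (y - 2 * PI) = sin y.
Proof. rewrite sin_minus, cos_2PI, sin_2PI. ring. Qed.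

Theorem proposition5p2 :
  forall (a th : R) (phi beta G : R -> R),
    0 < a ->
    (* theta = tilde theta_alpha *)
    0 < th -> th < theta_plus a -> th < PI / 4 ->
    L_is_zero a th ->
    (* phi' ^2 = P(cos phi), phi(0) = 0, phi'(0) <= 0 *)
    (forall u, ex_derive phi u) ->
    (forall u, (Derive phi u) ^ 2 = Pp a th (cos (phi u))) ->
    phi 0 = 0 -> Derive phi 0 <= 0 ->
    (* beta' = C cos^2 phi, beta(0) = 0 *)
    (forall u, is_derive beta u (Cc a th * cos (phi u) ^ 2)) ->
    beta 0 = 0 ->
    (* G' = (C^2 cos^2 phi - cos 2 theta)/(alpha - phi'), G(0) = 0 *)
    (forall u, is_derive G u (Gprime a th phi u)) ->
    G 0 = 0 ->
    exists Zu Zv : R, (Zu, Zv) <> (0, 0) /\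
      forall u v, Xmap a th phi beta G (u + Zu) (v + Zv) = Xmap a th phi beta G u v.
Proof.
  intros a th phi beta G Ha H0 Hp H4 HL Hex Hsq Hphi0 Hd0 Hb Hb0 HG HG0.
  assert (HP1 : forall z, -1 <= z <= 1 -> 0 < Pp a th z) by (intros; apply P_pos; auto).
  assert (HP : forall y, 0 < Pp a th (cos y)) by (intros; apply HP1, COS_bound).
  assert (Hfp : forall y, 0 < ff a th y) by (intros; apply ff_pos; auto).
  assert (Hnz : forall u, Derive phi u <> 0).
  { intros u E. specialize (Hsq u). rewrite E in Hsq. specialize (HP (phi u)). lra. }
  assert (Hneg : forall u, Derive phi u < 0).
  { apply (deriv_neg phi (Derive phi)); auto.
    - intros; apply Derive_correct; auto.
    - specialize (Hnz 0); lra. }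
  assert (HD : forall u, Derive phi u = - ff a th (phi u)).
  { intros u. unfold ff. rewrite <- Hsq. rewrite <- Rsqr_pow2.
    replace ((Derive phi u)²) with ((- Derive phi u)²) by (unfold Rsqr; ring).
    rewrite sqrt_Rsqr. ring. specialize (Hneg u); lra. }
  assert (Hphi : forall u, is_derive phi u (- ff a th (phi u))).
  { intros u. rewrite <- HD. apply Derive_correct; auto. }
  assert (Cg1 : forall y, continuous (g1 a th) y) by (intros; apply g1_cont; auto).
  assert (CgK : forall y, continuous (gK a th) y) by (intros; apply gK_cont; auto).
  assert (CgM : forall y, continuous (gM a th) y) by (intros; apply gM_cont; auto).
  assert (Cell : forall y, continuous (ell a th) y) by (intros; apply ell_cont; auto).
  assert (Hu : forall u, u = - Gint (g1 a th) (phi u)).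
  { apply (compose_Gint phi (ff a th) (g1 a th) (fun u => u)); auto.
    intros u. replace (g1 a th (phi u) * ff a th (phi u)) with (@one R_AbsRing).
    apply is_derive_id. unfold g1. specialize (Hfp (phi u)). rewrite Rinv_l by lra. reflexivity. }
  assert (Hbeta : forall u, beta u = - Gint (gK a th) (phi u)).
  { apply (compose_Gint phi (ff a th) (gK a th) beta); auto.
    intros u. replace (gK a th (phi u) * ff a th (phi u)) with (Cc a th * cos (phi u) ^ 2).
    apply Hb. unfold gK. specialize (Hfp (phi u)). field. lra. }
  assert (HGG : forall u, G u = - Gint (gM a th) (phi u)).
  { apply (compose_Gint phi (ff a th) (gM a th) G); auto.
    intros u. replace (gM a th (phi u) * ff a th (phi u)) with (Gprime a th phi u).
    apply HG. unfold gM, Gprime. rewrite HD. specialize (Hfp (phi u)). field. lra. }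
  assert (Pg1 : forall y, g1 a th (y - 2 * PI) = g1 a th y) by (intros; unfold g1, ff; rewrite cos_m2pi; auto).
  assert (PgK : forall y, gK a th (y - 2 * PI) = gK a th y) by (intros; unfold gK, ff; rewrite cos_m2pi; auto).
  assert (PgM : forall y, gM a th (y - 2 * PI) = gM a th y) by (intros; unfold gM, ff; rewrite cos_m2pi; auto).
  assert (Pell : forall y, ell a th (y - 2 * PI) = ell a th y) by (intros; unfold ell, gK, gM, ff; rewrite cos_m2pi; auto).
  assert (Eell : forall y, ell a th (- y) = ell a th y) by (intros; unfold ell, gK, gM, ff; rewrite cos_neg; auto).
  set (T := - Gint (g1 a th) (- (2 * PI))).
  assert (HT : T <> 0).
  { unfold T. pose proof (Gint_lt (g1 a th) Cg1) as Hlt.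
    assert (Hg1p : forall x, 0 < g1 a th x) by (intros; unfold g1; apply Rinv_0_lt_compat; auto).
    specialize (Hlt Hg1p (- (2 * PI)) 0). rewrite Gint_0 in Hlt. pose proof PI_RGT_0. 
    specialize (Hlt ltac:(lra)). lra. }
  assert (Hper : forall u, phi (u + T) = phi u - 2 * PI).
  { intros u. apply (Gint_inj (g1 a th) Cg1).
    - intros; unfold g1; apply Rinv_0_lt_compat; auto.
    - rewrite (Gint_shift (g1 a th) (2 * PI) Cg1 Pg1).
      pose proof (Hu (u + T)). pose proof (Hu u). unfold T in *. lra. }
  set (KK := Gint (gK a th) (- (2 * PI))).
  set (MM := Gint (gM a th) (- (2 * PI))).
  assert (Hbp : forall u, beta (u + T) = beta u - KK).
  { intros u. rewrite !Hbeta, Hper, (Gint_shift (gK a th) (2 * PI) CgK PgK). unfold KK. ring. }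
  assert (HGp : forall u, G (u + T) = G u - MM).
  { intros u. rewrite !HGG, Hper, (Gint_shift (gM a th) (2 * PI) CgM PgM). unfold MM. ring. }
  assert (Hlin : forall y, Gint (ell a th) y - Cc a th * Gint (gK a th) y - a * Gint (gM a th) y
                          = Gint (ell a th) 0 - Cc a th * Gint (gK a th) 0 - a * Gint (gM a th) 0).
  { intros y. apply (const_deriv (fun y => Gint (ell a th) y - Cc a th * Gint (gK a th) y - a * Gint (gM a th) y)).
    intros x. replace 0 with (ell a th x - Cc a th * gK a th x - a * gM a th x) by (unfold ell; ring).
    apply lin3_deriv; apply Gint_deriv; auto. }
  assert (Hzero : Gint (ell a th) (- (2 * PI)) = 0).
  { pose proof (Gint_shift (ell a th) (2 * PI) Cell Pell PI) as E1.
    replace (PI - 2 * PI) with (- PI) in E1 by ring.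
    rewrite (Gint_even (ell a th) Cell Eell) in E1.
    assert (Gint (ell a th) PI = 0) by (unfold Gint; apply RInt_ell_pi; auto).
    lra. }
  assert (HKM : Cc a th * KK + a * MM = 0).
  { specialize (Hlin (- (2 * PI))). rewrite !Gint_0, Hzero in Hlin. unfold KK, MM. lra. }
  exists T, (KK / a). split.
  { intros E. injection E. intros _ E'. apply HT; exact E'. }
  intros u v. unfold Xmap. cbv beta zeta.
  assert (Hc : cos (phi (u + T)) = cos (phi u)) by (rewrite Hper; apply cos_m2pi).
  assert (Hs : sin (phi (u + T)) = sin (phi u)) by (rewrite Hper; apply sin_m2pi).
  assert (HGpr : Gprime a th phi (u + T) = Gprime a th phi u).
  { unfold Gprime. rewrite !HD, Hper. unfold ff. rewrite !cos_m2pi. reflexivity. }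

  rewrite Hc, Hs, HGpr, Hbp, HGp.
  replace (a * (v + KK / a) + (beta u - KK)) with (a * v + beta u) by (field; lra).
  replace (Cc a th * (v + KK / a) - (G u - MM)) with (Cc a th * v - G u).
  reflexivity.
  apply Rmult_eq_reg_l with a; [|lra]. field_simplify; try lra.
Qed.
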